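(* Let $n$ be a positive integer, $\pi\in\mathrm{NC}_B(n)$ and $\psi(\pi)=(\sigma,x)$. Write $i\sim_\pi j$ if $i,j$ lie in the same block of $\pi$. Then: (1) $x=\emptyset$ if and only if there is no $i\in[\pm n]$ with $i\sim_\pi -i$ and there are no positive integers $i,j$ with $i\sim_\pi -j$; (2) $x$ is an edge if and only if there is no $i$ with $i\sim_\pi -i$ and there are positive integers $i,j$ with $i\sim_\pi -j$; in this case there is a unique pair $(a,b)$ of positive integers with $a<b$ such that $b-a$ is minimal subject to $a\sim_\pi -b$, this $(a,b)$ is an edge of $\sigma$, and $x=(a,b)$; (3) $x$ is a block if and only if there is an $i$ with $i\sim_\pi -i$; in this case $x$ is the block consisting of the positive integers $i$ with $i\sim_\pi -i$.
   Context: $[\pm n]=\{1,\dots,n,-1,\dots,-n\}$. A partition of type $B_n$ is a partition $\pi$ of $[\pm n]$ such that $-B$ is a block whenever $B$ is, with at most one block satisfying $B=-B$; it is noncrossing if, in the linear order $1<\cdots<n<-1<\cdots<-n$, there are no $a<b<c<d$ with $a,c$ in one block and $b,d$ in another. $\mathrm{NC}_B(n)$ is the set of these; $\mathrm{NC}(n)$ is the set of noncrossing partitions of $[n]$. An edge of $\sigma\in\mathrm{NC}(n)$ is a pair $(i,j)$, $i<j$, with $i,j$ in a common block containing no integer strictly between them. The map $\psi$: given $\pi\in\mathrm{NC}_B(n)$, let $\eta$ be obtained by deleting all negative integers from the blocks of $\pi$ (discarding empty sets), and let $X$ be the set of blocks $A$ of $\eta$ such that the block of $\pi$ containing $A$ also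 contains a negative integer. Write $X=\{A_1,\dots,A_m\}$ with $\max A_1<\cdots<\max A_m$. Let $\sigma$ be obtained from $\eta$ by merging $A_i$ and $A_{m+1-i}$ for $i=1,\dots,\lfloor m/2\rfloor$; $x=\emptyset$ if $m=0$, $x=(\max A_{m/2},\min A_{m/2+1})$ if $m>0$ is even, $x=A_{(m+1)/2}$ if $m$ is odd; $\psi(\pi)=(\sigma,x)$. *)

(* Defs.v *)
From mathcomp Require Import all_boot.
Set Implicit Arguments. Unset Strict Implicit. Unset Printing Implicit Defensive.

(* Encoding of [±n] = {1,..,n,-1,..,-n}: the type 'I_n * bool.
   (k, false) stands for the positive integer k+1,
   (k, true)  stands for the negative integer -(k+1).
   [n] = {1,..,n} is encoded by 'I_n, k standing for k+1
   (so differences b - a are unchanged). *)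
Definition pm (n : nat) := ('I_n * bool)%type.

(* position in the linear order 1 < ... < n < -1 < ... < -n *)
Definition rk n (i : pm n) : nat := if i.2 then n + i.1 else i.1.

Definition negpm n (i : pm n) : pm n := (i.1, ~~ i.2).
Definition negset n (B : {set pm n}) : {set pm n} := [set negpm i | i in B].

Definition typeB_partition n (P : {set {set pm n}}) : Prop :=
  [/\ partition P [set: pm n],
      (forall B, B \in P -> negset B \in P)
    & (forall B C, B \in P -> C \in P -> negset B = B -> negset C = C -> B = C)].

Definition noncrossing_B n (P : {set {set pm n}}) : Prop :=
  forall B C, B \in P -> C \in P ->
  forall a b c d : pm n, rk a < rk b -> rk b < rk c -> rk c < rk d ->
    a \in B -> c \in B -> b \in C -> d \in C -> B = C.

Definition NCB n (P : {set {set pm n}}) : Prop :=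
  typeB_partition P /\ noncrossing_B P.

Definition sameblock n (P : {set {set pm n}}) (i j : pm n) : bool :=
  [exists B in P, (i \in B) && (j \in B)].

Definition is_edge n (S : {set {set 'I_n}}) (i j : 'I_n) : Prop :=
  i < j /\ exists2 B, B \in S &
    [/\ i \in B, j \in B & forall k : 'I_n, i < k -> k < j -> k \notin B].

Inductive xval (n : nat) :=
| XEmpty
| XEdge of nat & nat      (* 0-based labels as in 'I_n *)
| XBlock of {set 'I_n}.

Section Psi.
Variable n : nat.
Variable P : {set {set pm n}}.

Definition posB (B : {set pm n}) : {set 'I_n} := [set k | (k, false) \in B].
Definition hasneg (B : {set pm n}) : bool := [exists k, (k, true) \in B].

Definition eta_part : {set {set 'I_n}} :=
  [set posB B | B in [set B in P | posB B != set0]].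
Definition Xset : {set {set 'I_n}} :=
  [set posB B | B in [set B in P | (posB B != set0) && hasneg B]].

Definition maxs (A : {set 'I_n}) : nat := \max_(i in A) (i : nat).
Definition mins (A : {set 'I_n}) : nat := \big[minn/n]_(i in A) (i : nat).

Definition Xseq : seq {set 'I_n} :=
  sort (fun A C => maxs A <= maxs C) (enum Xset).
Definition mX : nat := size Xseq.
Definition As (j : nat) : {set 'I_n} := nth set0 Xseq j.  (* 0-based: As j = A_(j+1) *)

Definition psi_sigma : {set {set 'I_n}} :=
  [set A in eta_part | A \notin Xset] :|:
  [set As j :|: As (mX.-1 - j) | j : 'I_mX].

Definition psi_x : xval n :=
  if mX == 0 then XEmpty n
  else if ~~ odd mX then XEdge n (maxs (As (mX./2).-1)) (mins (As mX./2))
  else XBlock (As mX./2).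

Definition psi : {set {set 'I_n}} * xval n := (psi_sigma, psi_x).
End Psi.

(* Main.v *)
Require Import Defs.
From mathcomp Require Import all_boot.
From mathcomp Require Import zify.
Set Implicit Arguments. Unset Strict Implicit. Unset Printing Implicit Defensive.

Section Main.
Variable n : nat.
Variable P : {set {set pm n}}.
Hypothesis HP : NCB P.

Definition negB (B : {set pm n}) : {set 'I_n} := [set k | (k, true) \in B].
Definition mixed (B : {set pm n}) := (posB B != set0) && (negB B != set0).
Definition ltS (A C : {set 'I_n}) := forall a c : 'I_n, a \in A -> c \in C -> a < c.

Lemma Pdisj B C x : B \in P -> C \in P -> x \in B -> x \in C -> B = C.
Proof.
case: HP => [[/and3P[_ tI _] _ _] _] hB hC xB xC.
case: (eqVneq B C) => // neq.
have := trivIsetP tI B C hB hC neq; rewrite -setI_eq0 => /eqP/setP/(_ x).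
by rewrite !inE xB xC.
Qed.

Lemma Pcov x : exists2 B, B \in P & x \in B.
Proof.
case: HP => [[/and3P[/eqP cv _ _] _ _] _].
have : x \in cover P by rewrite cv inE.
by case/bigcupP => B hB xB; exists B.
Qed.

Lemma Pnon0 B : B \in P -> B != set0.
Proof.
case: HP => [[/and3P[_ _ h0] _ _] _] hB.
by apply/eqP => e; move: h0; rewrite -e hB.
Qed.

Lemma mem_negset (i : pm n) (B : {set pm n}) : (i \in negset B) = (negpm i \in B).
Proof.
apply/imsetP/idP => [[j jB ->]|h].
  by rewrite /negpm /= negbK -surjective_pairing.
exists (negpm i) => //; by rewrite /negpm /= negbK -surjective_pairing.
Qed.

Lemma negsetP B : B \in P -> negset B \in P.
Proof. by case: HP => [[_ h _] _]; apply: h. Qed.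

Lemma posB_neg (B : {set pm n}) : posB (negset B) = negB B.
Proof. by apply/setP => k; rewrite !inE mem_negset. Qed.
Lemma negB_neg (B : {set pm n}) : negB (negset B) = posB B.
Proof. by apply/setP => k; rewrite !inE mem_negset. Qed.

Lemma mixed_neg (B : {set pm n}) : mixed B -> mixed (negset B).
Proof. by rewrite /mixed posB_neg negB_neg andbC. Qed.

Lemma hasnegE (B : {set pm n}) : hasneg B = (negB B != set0).
Proof. by apply/existsP/set0Pn => -[k hk]; exists k; move: hk; rewrite ?inE. Qed.

Lemma cross B D a b c d : B \in P -> D \in P -> rk a < rk b -> rk b < rk c ->
  rk c < rk d -> a \in B -> c \in B -> b \in D -> d \in D -> B = D.
Proof. move=> hB hD l1 l2 l3 aB cB bD dD; case: HP => _ h; exact: (h B D hB hD a b c d l1 l2 l3 aB cB bD dD). Qed.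

Lemma sep1 B D (b d : 'I_n) : B \in P -> D \in P -> mixed B -> mixed D -> B != D ->
  b \in posB B -> d \in posB D -> b < d -> ltS (posB B) (posB D).
Proof.
move=> hB hD /andP[_ /set0Pn[f fB]] /andP[_ /set0Pn[e eD]] neq bB dD lbd p r pB rD.
move: pB rD bB dD fB eD; rewrite !inE => pB rD bB dD fB eD.
have ne : forall u v : 'I_n, (u, false) \in B -> (v, false) \in D -> u != v :> nat.
  move=> u v uB vD; apply/negP => /eqP /val_inj euv.
  by move: uB; rewrite euv => uB; rewrite (Pdisj hB hD uB vD) eqxx in neq.
have := ne _ _ pB rD; have := ne _ _ bB dD; have := ne _ _ pB dD => n1 n2 n3.
case: (ltnP p r) => // hrp.
have lrp : r < p by lia.
have [ldp|hpd] := ltnP d p.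
- have := @cross B D (b,false) (d,false) (p,false) (e,true) hB hD.
  rewrite /rk /= => h; have := ltn_ord p => ?; have E : B = D by apply: h => //; lia.
  by rewrite E eqxx in neq.
- have := @cross D B (r,false) (p,false) (d,false) (f,true) hD hB.
  rewrite /rk /= => h; have := ltn_ord d => ?; have E : D = B by apply: h => //; lia.
  by rewrite E eqxx in neq.
Qed.

Lemma sep B D : B \in P -> D \in P -> mixed B -> mixed D -> B != D ->
  ltS (posB B) (posB D) \/ ltS (posB D) (posB B).
Proof.
move=> hB hD mB mD neq.
have /andP[/set0Pn[b bB] _] := mB; have /andP[/set0Pn[d dD] _] := mD.
case: (ltngtP b d) => [l|l|e].
- by left; apply: (sep1 hB hD mB mD neq bB dD l).
- by right; apply: (sep1 hD hB mD mB _ dD bB l); rewrite eq_sym.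
- have eq: b = d by apply: val_inj.
  by move: bB dD; rewrite !inE eq => bB dD; move: neq; rewrite (Pdisj hB hD bB dD) eqxx.
Qed.

Lemma rev B D : B \in P -> D \in P -> mixed B -> mixed D -> B != D ->
  ltS (posB B) (posB D) -> ltS (negB D) (negB B).
Proof.
move=> hB hD /andP[/set0Pn[p pB] _] /andP[/set0Pn[r rD] _] neq lt a c aD cB.
have lpr := lt _ _ pB rD.
move: pB rD aD cB; rewrite !inE => pB rD aD cB.
case: (ltnP a c) => // hca.
have nca : c != a :> nat.
  apply/negP => /eqP /val_inj eca; move: cB; rewrite eca => cB.
  by rewrite (Pdisj hB hD cB aD) eqxx in neq.
have lca : c < a by lia.
have := @cross B D (p,false) (r,false) (c,true) (a,true) hB hD.
rewrite /rk /= => h; have := ltn_ord r => ?; have E : B = D by apply: h => //; lia.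
by rewrite E eqxx in neq.
Qed.

Lemma XsetE A : A \in Xset P -> exists2 B, B \in P & mixed B /\ A = posB B.
Proof.
case/imsetP => B; rewrite inE => /andP[hB /andP[h1 h2]] ->.
by exists B => //; rewrite /mixed h1 -hasnegE h2.
Qed.

Lemma XsetI B : B \in P -> mixed B -> posB B \in Xset P.
Proof.
move=> hB /andP[h1 h2]; apply/imsetP; exists B => //.
by rewrite inE hB h1 hasnegE h2.
Qed.

Lemma Xset_n0 A : A \in Xset P -> A != set0.
Proof. by case/XsetE => B _ [/andP[h _] ->]. Qed.

Lemma As_in i : i < mX P -> As P i \in Xset P.
Proof. by move=> h; have := mem_nth set0 h; rewrite mem_sort mem_enum. Qed.

Lemma As_idx A : A \in Xset P -> exists2 i, i < mX P & As P i = A.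
Proof.
move=> hA; have hs : A \in Xseq P by rewrite mem_sort mem_enum.
by exists (index A (Xseq P)); [rewrite /mX index_mem | rewrite /As nth_index].
Qed.

Lemma As_inj i j : i < mX P -> j < mX P -> As P i = As P j -> i = j.
Proof.
move=> hi hj e; apply/eqP; rewrite -(nth_uniq set0 hi hj) ?sort_uniq ?enum_uniq //.
by apply/eqP.
Qed.

Lemma As_size i : As P i != set0 -> i < mX P.
Proof.
by rewrite /As; case: (ltnP i (mX P)) => // h; rewrite nth_default ?eqxx.
Qed.

Lemma maxs_ge (A : {set 'I_n}) (a : 'I_n) : a \in A -> a <= maxs A.
Proof. by move=> h; apply: (leq_bigmax_cond a). Qed.

Lemma maxs_at (A : {set 'I_n}) : A != set0 -> exists2 a : 'I_n, a \in A & maxs A = a.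
Proof.
case/set0Pn => a0 h0; have : 0 < #|A| by apply/card_gt0P; exists a0.
by case/(eq_bigmax_cond (fun i : 'I_n => (i : nat))) => a ha e; exists a.
Qed.

Lemma mins_le (A : {set 'I_n}) (a : 'I_n) : a \in A -> mins A <= a.
Proof.
move=> hA; rewrite /mins.
have : a \in index_enum 'I_n by rewrite mem_index_enum.
elim: (index_enum _) => [|x r IH] //=.
rewrite big_cons inE => /orP[/eqP <-|h]; first by rewrite hA geq_minl.
case: ifP => _; last exact: IH.
by apply: leq_trans (IH h); apply: geq_minr.
Qed.

Lemma mins_at (A : {set 'I_n}) : A != set0 -> exists2 a : 'I_n, a \in A & mins A = a.
Proof.
case/set0Pn => a0 h0.
have : mins A == n \/ exists2 a : 'I_n, a \in A & mins A = a.
  rewrite /mins; apply: (big_ind (fun v => v == n \/ exists2 a : 'I_n, a \in A & v = a)).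
  - by left.
  - by move=> u v hu hv /=; case: (leqP u v).
  - by move=> i hi; right; exists i.
case => // /eqP e; have := mins_le h0; rewrite e; have := ltn_ord a0; lia.
Qed.

Definition ltS_irr (A : {set 'I_n}) : A != set0 -> ltS A A -> False.
Proof. by case/set0Pn => a ha h; have := h _ _ ha ha; rewrite ltnn. Qed.

Lemma ltS_asym (A C : {set 'I_n}) : A != set0 -> C != set0 -> ltS A C -> ltS C A -> False.
Proof.
case/set0Pn => a ha /set0Pn[c hc] h1 h2.
by have := h1 _ _ ha hc; have := h2 _ _ hc ha; lia.
Qed.

Lemma As_lt i j : i < j -> j < mX P -> ltS (As P i) (As P j).
Proof.
move=> lij hj; have hi : i < mX P by apply: ltn_trans hj.
have srt : sorted (fun A C => maxs A <= maxs C) (Xseq P).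
  by apply: sort_sorted => A C; apply: leq_total.
have hmax : maxs (As P i) <= maxs (As P j).
  have tr : transitive (fun A C : {set 'I_n} => maxs A <= maxs C).
    by move=> ? ? ? h1 h2; apply: leq_trans h1 h2.
  by apply: (sorted_ltn_nth tr set0 srt).
have := As_in hi; have := As_in hj.
case/XsetE => D hD [mD eD]; case/XsetE => B hB [mB eB].
have neq : B != D.
  apply/eqP => e; have := As_inj hi hj; rewrite eB eD e => /(_ erefl) e'.
  by rewrite e' ltnn in lij.
case: (sep hB hD mB mD neq); first by rewrite eB eD.
move=> h; exfalso.
have := maxs_at (Xset_n0 (As_in hi)); case=> a ha ea.
have := maxs_at (Xset_n0 (As_in hj)); case=> c hc ec.
move: ha hc; rewrite eB eD => ha hc; have := h _ _ hc ha.
move: hmax; rewrite ea ec; lia.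
Qed.

Definition R i j := exists2 B, B \in P & [/\ mixed B, posB B = As P i & negB B = As P j].

Lemma R_lt i j : R i j -> i < mX P /\ j < mX P.
Proof.
case=> B _ [/andP[h1 h2] e1 e2]; split; apply: As_size; by rewrite -?e1 -?e2.
Qed.

Lemma R_ex i : i < mX P -> exists j, R i j.
Proof.
move=> hi; case/XsetE: (As_in hi) => B hB [mB e].
have := XsetI (negsetP hB) (mixed_neg mB); rewrite posB_neg => /As_idx[j _ ej].
by exists j; exists B.
Qed.

Lemma R_rev i j i' j' : R i j -> R i' j' -> i < i' -> j' < j.
Proof.
move=> r1 r2 lt; have [hi hj] := R_lt r1; have [hi' hj'] := R_lt r2.
case: r1 => B hB [mB e1 e2]; case: r2 => D hD [mD e1' e2'].
have l := As_lt lt hi'.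
have neq : B != D.
  apply/eqP => e; move: e1 e1'; rewrite e => -> /(As_inj hi hi') e'.
  by rewrite e' ltnn in lt.
have := rev hB hD mB mD neq; rewrite e1 e1' e2 e2' => /(_ l) l2.
case: (ltngtP j' j) => // h.
- exfalso; apply: (ltS_asym _ _ l2 (As_lt h hj')); apply: Xset_n0; exact: As_in.
- exfalso; move: l2; rewrite h; apply: ltS_irr; apply: Xset_n0; exact: As_in.
Qed.

Lemma R_ge d : forall i j, i + d = (mX P).-1 -> R i j -> (mX P).-1 - i <= j.
Proof.
elim: d => [|d IH] i j e r; first by lia.
have [hi hj] := R_lt r.
have hi1 : i.+1 < mX P by lia.
case: (R_ex hi1) => j' r'.
have := IH i.+1 j' ltac:(lia) r'; have := R_rev r r' (ltnSn i); lia.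
Qed.

Lemma R_le i : forall j, R i j -> j <= (mX P).-1 - i.
Proof.
elim: i => [|i IH] j r; have [hi hj] := R_lt r; first by lia.
have hi0 : i < mX P by lia.
case: (R_ex hi0) => j' r'.
have := IH j' r'; have := R_rev r' r (ltnSn i); lia.
Qed.

Lemma R_val i j : R i j -> j = (mX P).-1 - i.
Proof.
move=> r; have := R_le r; have := @R_ge ((mX P).-1 - i) i j.
have [hi _] := R_lt r; move=> h; have := h ltac:(lia) r; lia.
Qed.

Lemma sbP (i j : pm n) : reflect (exists2 B, B \in P & i \in B /\ j \in B) (sameblock P i j).
Proof.
apply: (iffP existsP) => [[B /andP[hB /andP[h1 h2]]]|[B hB [h1 h2]]]; first by exists B.
by exists B; rewrite hB h1 h2.
Qed.

Lemma sb_R (a b : 'I_n) : sameblock P (a,false) (b,true) ->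
  exists i, [/\ i < mX P, R i ((mX P).-1 - i), a \in As P i & b \in As P ((mX P).-1 - i)].
Proof.
case/sbP => B hB [ha hb].
have mB : mixed B by apply/andP; split; apply/set0Pn; [exists a | exists b]; rewrite inE.
case/As_idx: (XsetI hB mB) => i hi ei.
have := XsetI (negsetP hB) (mixed_neg mB); rewrite posB_neg => /As_idx[j _ ej].
have r : R i j by exists B.
have ej' := R_val r; subst j.
by exists i; split => //; rewrite ?ei ?ej inE.
Qed.

Lemma mpos_iff : 0 < mX P <-> exists i j : 'I_n, sameblock P (i,false) (j,true).
Proof.
split => [h|[i [j /sb_R [k [hk _ _ _]]]]]; last by lia.
case/XsetE: (As_in h) => B hB [/andP[/set0Pn[a ha] /set0Pn[b hb]] _].
exists a, b; apply/sbP; exists B => //; move: ha hb; rewrite !inE; done.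
Qed.

Lemma Z_any : (exists i : pm n, sameblock P i (negpm i)) <->
  exists k : 'I_n, sameblock P (k,false) (k,true).
Proof.
split => [[[k b] h]|[k h]]; last by exists (k,false).
exists k; case: b h => //= /sbP[B hB [h1 h2]]; apply/sbP; exists B => //.
Qed.

Lemma same_idx i (k : 'I_n) : i < mX P -> k \in As P i -> k \in As P ((mX P).-1 - i) ->
  i = (mX P).-1 - i.
Proof.
move=> hi h1 h2.
case: (ltngtP i ((mX P).-1 - i)) => // l.
- have hj : (mX P).-1 - i < mX P by lia.
  by have := As_lt l hj h1 h2; rewrite ltnn.
- by have := As_lt l hi h2 h1; rewrite ltnn.
Qed.

Lemma Z_odd : (exists k : 'I_n, sameblock P (k,false) (k,true)) <-> odd (mX P).
Proof.
split => [[k /sb_R [i [hi _ h1 h2]]]|od].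
  have e := same_idx hi h1 h2.
  have -> : mX P = (i.*2).+1 by rewrite -addnn; lia.
  by rewrite /= odd_double.
have em := odd_double_half (mX P); rewrite od -addnn in em.
have hh : (mX P)./2 < mX P by lia.
case: (R_ex hh) => j r; have ej := R_val r.
have ej' : j = (mX P)./2 by lia.
case: r => B hB [_ e1 e2]; rewrite ej' in e2.
have /set0Pn[k hk] := Xset_n0 (As_in hh).
exists k; apply/sbP; exists B => //.
move: (hk); rewrite -e1 inE => h1; move: hk; rewrite -e2 inE => h2; by split.
Qed.

Lemma Zset : odd (mX P) -> As P (mX P)./2 = [set k : 'I_n | sameblock P (k, false) (k, true)].
Proof.
move=> od; have em := odd_double_half (mX P); rewrite od -addnn in em.
have hh : (mX P)./2 < mX P by lia.
case: (R_ex hh) => j r; have ej := R_val r.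
have ej' : j = (mX P)./2 by lia.
case: r => B hB [_ e1 e2]; rewrite ej' in e2.
apply/setP => k; rewrite inE; apply/idP/idP => [hk|/sb_R [i [hi _ h1 h2]]].
  apply/sbP; exists B => //; move: (hk); rewrite -e1 inE => h1; move: hk; rewrite -e2 inE => h2; by split.
have e := same_idx hi h1 h2.
have -> : (mX P)./2 = i by lia.
exact: h1.
Qed.

Lemma edge_main : 0 < mX P -> ~~ odd (mX P) ->
  exists a b : 'I_n,
      [/\ a < b /\ sameblock P (a, false) (b, true),
          (forall a' b' : 'I_n, a' < b' -> sameblock P (a', false) (b', true) ->
             b - a <= b' - a'),
          (forall a' b' : 'I_n, a' < b' -> sameblock P (a', false) (b', true) ->
             b' - a' <= b - a -> a' = a /\ b' = b),
          is_edge (psi_sigma P) a b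
        & XEdge n (maxs (As P ((mX P)./2).-1)) (mins (As P (mX P)./2)) = XEdge n a b].
Proof.
move=> mp ev; have em := odd_double_half (mX P); rewrite (negbTE ev) add0n -addnn in em.
set h := (mX P)./2 in em *.
have hh : h < mX P by lia.
have hi0 : h.-1 < mX P by lia.
case: (R_ex hi0) => j r; have ej := R_val r.
have ej' : j = h by lia.
case: r => B hB [_ e1 e2]; rewrite ej' in e2.
case: (maxs_at (Xset_n0 (As_in hi0))) => a ha ea.
case: (mins_at (Xset_n0 (As_in hh))) => b hb eb.
have l0 : h.-1 < h by lia.
have lt := As_lt l0 hh.
have lab := lt _ _ ha hb.
have bnd : forall a' b' : 'I_n, a' < b' -> sameblock P (a', false) (b', true) ->
    a' <= a /\ b <= b'.
  move=> a' b' l /sb_R [k [hk _ h1 h2]].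
  have kle : k <= h.-1.
    case: (leqP k h.-1) => // kg.
    have l1 : (mX P).-1 - k < k by lia.
    by have := As_lt l1 hk h2 h1; lia.
  split.
    case: (ltnP k h.-1) => lk.
    - by have := As_lt lk hi0 h1 ha; lia.
    - have ek : k = h.-1 by lia.
      by move: h1; rewrite ek => h1; rewrite -ea; apply: maxs_ge.
  case: (ltnP h ((mX P).-1 - k)) => lk.
  - have hj : (mX P).-1 - k < mX P by lia.
    by have := As_lt lk hj hb h2; lia.
  - have ek : (mX P).-1 - k = h by lia.
    by move: h2; rewrite ek => h2; rewrite -eb; apply: mins_le.
exists a, b; split.
- split => //; apply/sbP; exists B => //.
  by move: ha hb; rewrite -e1 -e2 !inE.
- by move=> a' b' l hs; have := bnd _ _ l hs; lia.
- move=> a' b' l hs hle; have := bnd _ _ l hs => -[l1 l2].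
  by split; apply: val_inj; rewrite /=; lia.
- split => //; exists (As P h.-1 :|: As P h).
    rewrite /psi_sigma inE; apply/orP; right; apply/imsetP.
    exists (Ordinal hi0) => //=.
    by have -> : (mX P).-1 - h.-1 = h by lia.
  split; rewrite ?inE ?ha ?hb ?orbT //.
  move=> k l1 l2; rewrite inE; apply/negP => /orP[hk|hk].
  + by have := maxs_ge hk; lia.
  + by have := mins_le hk; lia.
- by rewrite ea eb.
Qed.

End Main.

Theorem lemma3p2 (n : nat) (P : {set {set pm n}}) (sigma : {set {set 'I_n}})
    (x : xval n) :
  0 < n -> NCB P -> psi P = (sigma, x) ->
  [/\
   (* (1) *)
   (x = XEmpty n <->
      ~ (exists i : pm n, sameblock P i (negpm i)) /\
      ~ (exists i j : 'I_n, sameblock P (i, false) (j, true))),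
   (* (2) *)
   ((exists a b, x = XEdge n a b) <->
      ~ (exists i : pm n, sameblock P i (negpm i)) /\
      (exists i j : 'I_n, sameblock P (i, false) (j, true))),
   (~ (exists i : pm n, sameblock P i (negpm i)) /\
      (exists i j : 'I_n, sameblock P (i, false) (j, true)) ->
    exists a b : 'I_n,
      [/\ a < b /\ sameblock P (a, false) (b, true),
          (forall a' b' : 'I_n, a' < b' -> sameblock P (a', false) (b', true) ->
             b - a <= b' - a'),
          (forall a' b' : 'I_n, a' < b' -> sameblock P (a', false) (b', true) ->
             b' - a' <= b - a -> a' = a /\ b' = b),
          is_edge sigma a b
        & x = XEdge n a b]),
   (* (3) *)
   ((exists A, x = XBlock A) <-> exists i : pm n, sameblock P i (negpm i))
 & ((exists i : pm n, sameblock P i (negpm i)) ->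
      x = XBlock [set k : 'I_n | sameblock P (k, false) (k, true)])].
Proof.
move=> n0 HP [<- <-].
have ZE : (exists i : pm n, sameblock P i (negpm i)) <-> odd (mX P).
  split => h; [apply: (Z_odd HP).1; apply: (Z_any P).1 | apply: (Z_any P).2; apply: (Z_odd HP).2]; exact: h.
have ME := mpos_iff HP.
rewrite /psi_x.
case: (eqVneq (mX P) 0) => [m0|mn0] /=.
  have nZ : ~ (exists i : pm n, sameblock P i (negpm i)) by move=> /ZE; rewrite m0.
  have nM : ~ (exists i j : 'I_n, sameblock P (i, false) (j, true)) by move=> /ME; rewrite m0.
  split.
  - by split => // _.
  - by split => [[a [b e]] //|[_ /nM]].
  - by move=> [_ /nM].
  - by split => [[A e] //|/nZ].
  - by move=> /nZ.
have mp : 0 < mX P by rewrite lt0n.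
case: (boolP (odd (mX P))) => [od|ev] /=.
  have Z : exists i : pm n, sameblock P i (negpm i) by apply/ZE.
  split.
  - by split => // -[].
  - by split => [[a [b e]] //|[]].
  - by case.
  - by split => // _; exists (As P (mX P)./2).
  - by move=> _; rewrite (Zset HP od).
have nZ : ~ (exists i : pm n, sameblock P i (negpm i)) by move=> /ZE; rewrite (negbTE ev).
have M : exists i j : 'I_n, sameblock P (i, false) (j, true) by apply/ME.
have [a [b [h1 h2 h3 h4 h5]]] := edge_main HP mp ev.
split.
- by split => // -[_ []].
- by split => // _; exists (maxs (As P (mX P)./2.-1)), (mins (As P (mX P)./2)).
- by move=> _; exists a, b.
- by split => [[A e] //|/nZ].
- by move/nZ.
Qed.
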